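(* Let $A, B \in M_n(\mathbb{C})$. Assume that $\mathrm{Sp}(kA+B) \subset \mathbb{Z}$ for every $k \in \mathbb{N}$. Then the pair $(A,B)$ has property L.
   Context: $\mathbb{N}$ is the set of non-negative integers; $\mathrm{Sp}(M)$ is the set of eigenvalues of $M$. A pair $(A,B) \in M_n(\mathbb{C})^2$ has property L if there exist $n$ linear forms $f_1,\dots,f_n$ on $\mathbb{C}^2$ such that for all $(x,y) \in \mathbb{C}^2$, the characteristic polynomial of $xA+yB$ equals $\prod_{k=1}^n (X - f_k(x,y))$. Equivalently, there exist affine maps $g_1,\dots,g_n:\mathbb{C}\to\mathbb{C}$ with $\chi_{A+zB}(X)=\prod_{k=1}^n (X-g_k(z))$ for all $z \in \mathbb{C}$. *)

(* Defs.v *)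
From HB Require Import structures.
From mathcomp Require Import all_boot all_order all_algebra.
Set Implicit Arguments. Unset Strict Implicit. Unset Printing Implicit Defensive.
Import Order.TTheory GRing.Theory Num.Theory.
Local Open Scope ring_scope.

Definition spec_in_Z (C : numClosedFieldType) (n : nat) (M : 'M[C]_n) : Prop :=
  forall lam : C, eigenvalue M lam -> exists z : int, lam = z%:~R.

Definition propertyL (C : numClosedFieldType) (n : nat) (A B : 'M[C]_n) : Prop :=
  exists a b : 'I_n -> C, forall x y : C,
    char_poly (x *: A + y *: B) = \prod_(k < n) ('X - (a k * x + b k * y)%:P).

(* Main.v *)
Require Import Defs.
From HB Require Import structures.
From mathcomp Require Import all_boot all_order all_algebra.
Set Implicit Arguments. Unset Strict Implicit. Unset Printing Implicit Defensive.
Import Order.TTheory GRing.Theory Num.Theory.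
Local Open Scope ring_scope.
From Stdlib Require Import Lia Classical.
Lemma roots_inf (C : numClosedFieldType) (q : {poly C}) :
  (forall B : nat, exists2 k : nat, (B <= k)%N & q.[k%:R] = 0) -> q = 0.
Proof.
move=> H.
have Hs : forall m, exists s : seq nat, [/\ size s = m, uniq s & all (fun k => q.[k%:R] == 0) s].
  elim=> [|m [s [Hsz Hu Ha]]]; first by exists [::].
  have [k Hk Hq] := H (\max_(x <- s) x).+1.
  exists (k :: s); split => //=; first by rewrite Hsz.
    rewrite Hu andbT; apply/negP => ks.
    have : (k <= \max_(x <- s) x)%N by apply: leq_bigmax_seq.
    by rewrite leqNgt Hk.
  by rewrite Hq eqxx.
have [s [Hsz Hu Ha]] := Hs (size q).
apply: (@roots_geq_poly_eq0 _ q [seq (k%:R : C) | k <- s]).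
- by apply/allP => x /mapP [k ks ->]; rewrite /root; have := allP Ha k ks.
- by rewrite map_inj_uniq // => a b /eqP; rewrite eqr_nat => /eqP.
- by rewrite size_map Hsz.
Qed.

Lemma poly_nat_roots (C : numClosedFieldType) (q : {poly C}) :
  (forall k : nat, q.[k%:R] = 0) -> q = 0.
Proof. by move=> H; apply: roots_inf => B; exists B. Qed.
Lemma size_diff_le (C : numClosedFieldType) (f : {poly C}) d :
  (size f <= d.+1)%N -> (size ((f \Po ('X + 1%:P) - f)%R) <= d)%N.
Proof.
move=> Hf.
have s2 : size ('X + (1 : C)%:P) = 2 by rewrite size_XaddC.
have Hs : size (f \Po ('X + (1:C)%:P)) = size f by rewrite size_comp_poly2.
apply/leq_sizeP => j Hj; rewrite coefB.
case: (ltnP d j) => Hdj.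
  by rewrite !nth_default ?subr0 // ?Hs (leq_trans Hf).
have -> : j = d by apply/eqP; rewrite eqn_leq Hdj Hj.
case: (ltnP (size f) d.+1) => Hf2.
  by rewrite !nth_default ?subr0 // ?Hs.
have Hfd : size f = d.+1 by apply/eqP; rewrite eqn_leq Hf Hf2.
have := lead_coef_comp f (q := 'X + 1%:P); rewrite s2 => /(_ isT).
rewrite lead_coefXaddC expr1n mulr1 !lead_coefE Hs Hfd /= => ->.
by rewrite subrr.
Qed.

Lemma newton (C : numClosedFieldType) d (f : {poly C}) : (size f <= d)%N ->
  (forall k : nat, exists z : int, f.[k%:R] = z%:~R) ->
  exists c : nat -> int, forall x : nat,
    f.[x%:R] = (\sum_(i < d) c i * ('C(x, i))%:Z)%:~R.
Proof.
elim: d f => [|d IH] f Hs Hz.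
  exists (fun _ => 0) => x; move/size_poly_leq0P: Hs => ->.
  by rewrite big_ord0 horner0.
set g := f \Po ('X + 1%:P) - f.
have Hg : forall x : nat, g.[x%:R] = f.[x.+1%:R] - f.[x%:R].
  by move=> x; rewrite /g hornerD hornerN horner_comp hornerD hornerX hornerC -natr1.
have Hgs := size_diff_le Hs.
have Hgz : forall k : nat, exists z : int, g.[k%:R] = z%:~R.
  move=> k; have [z1 H1] := Hz k.+1; have [z0 H0] := Hz k.
  by exists (z1 - z0); rewrite Hg H1 H0 rmorphB.
have [c' Hc'] := IH g Hgs Hgz.
have [z0 Hz0] := Hz 0%N.
exists (fun i => if i is i'.+1 then c' i' else z0).
elim=> [|x IHx].
  rewrite Hz0 big_ord_recl /= bin0 mulr1 big1 ?addr0 // => i _.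
  by rewrite bin0n /= mulr0.
have -> : f.[x.+1%:R] = f.[x%:R] + g.[x%:R] by rewrite Hg addrC subrK.
rewrite IHx Hc' -rmorphD /=; congr (_%:~R).
rewrite !big_ord_recl /= !bin0 -addrA; congr (_ + _).
rewrite -big_split /=; apply: eq_bigr => i _.
by rewrite binS PoszD mulrDr.
Qed.

Lemma congr_p (C : numClosedFieldType) (f : {poly C}) p : prime p ->
  (size f <= p)%N -> (forall k : nat, exists z : int, f.[k%:R] = z%:~R) ->
  exists z : int, f.[p%:R] - f.[0] = (z * p%:Z)%:~R.
Proof.
move=> pp Hs Hz; have [c Hc] := newton Hs Hz.
have Hd : (p%:Z %| \sum_(i < p) c i * ('C(p, i)%:Z - 'C(0, i)%:Z))%Z.
  apply: rpred_sum => i _; case: i => [[|i] Hi] /=.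
    by rewrite !bin0 subrr mulr0 dvdz0.
  rewrite bin0n /= subr0; apply: dvdz_mull; rewrite dvdzE /=.
  by apply: prime_dvd_bin.
have [q Hq] := dvdzP Hd; exists q.
change (f.[p%:R] - f.[0%:R] = ((q * p%:Z)%:~R : C)); rewrite -Hq Hc Hc -rmorphB /= -sumrB; congr (_%:~R).
by apply: eq_bigr => i _; rewrite mulrBr.
Qed.

Lemma exp_le_base m n e : (m <= n)%N -> (m ^ e <= n ^ e)%N.
Proof. by move=> H; elim: e => // e IH; rewrite !expnS leq_mul. Qed.

Lemma ffact_le_exp x i : (x ^_ i <= x ^ i)%N.
Proof.
elim: i x => [|i IH] x //; rewrite ffactnS expnS leq_mul2l.
apply/orP; right; apply: leq_trans (IH _) _.
by apply: exp_le_base; apply: leq_pred.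
Qed.

Lemma bin_le_pow x i d : (i <= d)%N -> ('C(x, i) <= x.+1 ^ d)%N.
Proof.
move=> Hid; apply: (@leq_trans (x ^_ i)).
  by rewrite -bin_ffact leq_pmulr // fact_gt0.
apply: leq_trans (ffact_le_exp _ _) _.
apply: (@leq_trans (x.+1 ^ i)); first by apply: exp_le_base.
by apply: leq_pexp2l.
Qed.

Lemma newton_bound (C : numClosedFieldType) d (f : {poly C}) : (size f <= d.+1)%N ->
  (forall k : nat, exists z : int, f.[k%:R] = z%:~R) ->
  exists K : int, forall x : nat, exists2 z : int, f.[x%:R] = z%:~R &
    `|z| <= K * (x.+1 ^ d)%:Z.
Proof.
move=> Hs Hz; have [c Hc] := newton Hs Hz.
exists (\sum_(i < d.+1) `|c i|) => x; eexists; first exact: Hc x.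
rewrite mulr_suml; apply: le_trans (ler_norm_sum _ _ _) _.
apply: ler_sum => i _; rewrite normrM; apply: ler_wpM2l => //.
rewrite ger0_norm // lez_nat; apply: bin_le_pow.
by rewrite -ltnS.
Qed.
Lemma id_aux0 (R : zmodType) (u v w a : R) : u + (v - a) = u + w + v - (a + w).
Proof. by rewrite (addrAC u w v) opprD addrACA subrr addr0 addrA. Qed.

Lemma id_aux (R : comRingType) (x S q : R) :
  x ^+ 2 + (S ^+ 2 - 2%:R * q) = (x + S) ^+ 2 - 2%:R * (q - x * - S).
Proof.
rewrite mulrN opprK sqrrD !mulr_natl mulrnDl.
exact: id_aux0.
Qed.

Lemma sumsq (R : comRingType) (s : seq R) :
  let Q := 'X^2 * \prod_(y <- s) ('X - y%:P) in
  [/\ Q`_(size s).+3 = 0, Q`_(size s).+2 = 1, Q`_(size s).+1 = - \sum_(y <- s) y &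
      \sum_(y <- s) y ^+ 2 = (\sum_(y <- s) y) ^+ 2 - 2%:R * Q`_(size s)].
Proof.
elim: s => [|x s IH] /=.
  by rewrite !big_nil mulr1 !coefXn /= oppr0 expr0n mulr0 subr0.
move: IH; set Q := 'X^2 * _ => -[H3 H2 H1 HS].
have HQ : 'X^2 * \prod_(y <- x :: s) ('X - y%:P) = ('X - x%:P) * Q.
  by rewrite big_cons mulrCA.
have Hc : forall i, (('X - x%:P) * Q)`_i.+1 = Q`_i - x * Q`_i.+1.
  by move=> i; rewrite mulrBl coefB coefXM coefCM.
have H4 : Q`_(size s).+4 = 0.
  rewrite /Q coefXnM /= nth_default // size_prod_XsubC.
  by rewrite subSS subSS.
have E1 : \sum_(y <- x :: s) y = x + \sum_(y <- s) y by rewrite big_cons.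
have E2 : \sum_(y <- x :: s) y ^+ 2 = x ^+ 2 + \sum_(y <- s) y ^+ 2 by rewrite big_cons.
rewrite HQ !Hc H4 H3 H2 H1 mulr0 subr0 mulr1 E1 E2 HS; split => //; first by rewrite subr0.
  by rewrite opprD addrC.
by rewrite id_aux.
Qed.
Lemma nat_aux s1 s2 a b i j : (0 < s1)%N -> (0 < s2)%N -> (s1 <= a.+1 - j)%N ->
  (s2 <= b.+1 - (i - j))%N -> (j <= i)%N -> ((s1 + s2).-1 <= (a + b).+1 - i)%N.
Proof.
move=> /ssrnat.leP H1 /ssrnat.leP H2 /ssrnat.leP H3 /ssrnat.leP H4 /ssrnat.leP H5; apply/ssrnat.leP.
rewrite -!subn1 -?minusE -?plusE in H3 H4 *. lia.
Qed.

Definition wdeg (R : comRingType) (P : {poly {poly R}}) (d : nat) :=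
  forall i, (size (P`_i)%R <= d.+1 - i)%N.

Lemma wdeg0 (R : comRingType) d : wdeg (0 : {poly {poly R}}) d.
Proof. by move=> i; rewrite coef0 size_poly0. Qed.

Lemma wdegD (R : comRingType) (P Q : {poly {poly R}}) d :
  wdeg P d -> wdeg Q d -> wdeg (P + Q) d.
Proof.
move=> HP HQ i; rewrite coefD; apply: leq_trans (size_polyD _ _) _.
by rewrite geq_max HP HQ.
Qed.

Lemma wdeg_sum (R : comRingType) (I : Type) (r : seq I) (Pr : pred I)
  (F : I -> {poly {poly R}}) d :
  (forall i, Pr i -> wdeg (F i) d) -> wdeg (\sum_(i <- r | Pr i) F i) d.
Proof.
move=> H; apply: (big_ind (fun P => wdeg P d)) => [|x y Hx Hy|i Hi]; [exact: wdeg0|exact: (wdegD Hx Hy)|exact: H].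
Qed.

Lemma wdegM (R : comRingType) (P Q : {poly {poly R}}) a b :
  wdeg P a -> wdeg Q b -> wdeg (P * Q) (a + b).
Proof.
move=> HP HQ i; rewrite coefM; apply: leq_trans (size_sum _ _ _) _.
apply/bigmax_leqP => j _.
have [->|P0] := eqVneq P`_j 0; first by rewrite mul0r size_poly0.
have [->|Q0] := eqVneq Q`_(i - j) 0; first by rewrite mulr0 size_poly0.
apply: leq_trans (size_polyMleq _ _) _.
apply: nat_aux; rewrite ?size_poly_gt0 // -ltnS //.
Qed.

Lemma wdeg1 (R : comRingType) : wdeg (1 : {poly {poly R}}) 0.
Proof. by move=> [|i]; rewrite coef1 /= ?size_poly1 ?size_poly0. Qed.

Lemma wdegN1 (R : comRingType) : wdeg (-1 : {poly {poly R}}) 0.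
Proof. by move=> [|i]; rewrite coefN coef1 /= ?size_polyN ?size_poly1 ?oppr0 ?size_poly0. Qed.

Lemma wdeg_sign (R : comRingType) k : wdeg ((-1) ^+ k : {poly {poly R}}) 0.
Proof.
elim: k => [|k IH]; first exact: wdeg1.
by rewrite exprS; apply: (wdegM (a := 0) (b := 0)) => //; apply: wdegN1.
Qed.

Lemma wdeg_prod (R : comRingType) (I : Type) (r : seq I) (F : I -> {poly {poly R}}) :
  (forall i, wdeg (F i) 1) -> wdeg (\prod_(i <- r) F i) (size r).
Proof.
move=> H; elim: r => [|x r IH]; first by rewrite big_nil; apply: wdeg1.
by rewrite big_cons; apply: (wdegM (a := 1)).
Qed.

Lemma wdeg_le (R : comRingType) (P : {poly {poly R}}) d e :
  (d <= e)%N -> wdeg P d -> wdeg P e.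
Proof.
by move=> He H i; apply: leq_trans (H i) _; apply: leq_sub2r.
Qed.

Lemma wdeg_entry (R : comRingType) (c : {poly R}) (b : bool) :
  (size c <= 2)%N -> wdeg ('X *+ b - c%:P) 1.
Proof.
move=> Hc [|[|k]]; rewrite coefB coefMn coefX coefC /=.
- by rewrite mul0rn sub0r size_polyN.
- by rewrite subr0; case: b; rewrite ?mulr1n ?mulr0n ?size_poly1 ?size_poly0.
- by rewrite mul0rn subr0 size_poly0.
Qed.

Definition Mt (C : numClosedFieldType) n (A B : 'M[C]_n) : 'M[{poly C}]_n :=
  'X *: map_mx polyC A + map_mx polyC B.

Lemma wdeg_char (C : numClosedFieldType) n (A B : 'M[C]_n) :
  wdeg (char_poly (Mt A B)) n.
Proof.
rewrite /char_poly /determinant; apply: wdeg_sum => s _.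
have Hn : (0 + size (index_enum 'I_n) <= n)%N.
  by rewrite add0n /index_enum -enumT size_enum_ord.
apply: (wdeg_le Hn); apply: wdegM; first exact: wdeg_sign.
apply: wdeg_prod => i; rewrite /char_poly_mx !mxE.
apply: wdeg_entry.
apply: leq_trans (size_polyD _ _) _; rewrite geq_max size_polyC.
rewrite (leq_trans (leq_b1 _)) // andbT.
rewrite mulrC; apply: leq_trans (size_polyMleq _ _) _.
by rewrite size_polyC size_polyX; case: (_ != 0).
Qed.

Lemma eval_comp (C : numClosedFieldType) (P : {poly {poly C}}) (a : {poly C}) (c : C) :
  (P.[a]).[c] = (map_poly (horner_eval c) P).[a.[c]].
Proof. by rewrite -horner_evalE -horner_map /= horner_evalE. Qed.

Lemma prod_eval (C : numClosedFieldType) (S : seq int) (y : C) :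
  (\prod_(x <- S) ('X - (x%:~R)%:P)).[y] = \prod_(x <- S) (y - x%:~R).
Proof. by rewrite horner_prod; apply: eq_bigr => x _; rewrite hornerXsubC. Qed.

Lemma bipoly_eq (C : numClosedFieldType) (P Q : {poly {poly C}}) :
  (forall k : nat, map_poly (horner_eval (k%:R : C)) P = map_poly (horner_eval (k%:R : C)) Q) ->
  P = Q.
Proof.
move=> H; apply/polyP => i; apply/eqP; rewrite -subr_eq0; apply/eqP.
apply: poly_nat_roots => k; rewrite hornerD hornerN.
have := congr1 (fun p : {poly C} => p`_i) (H k); rewrite !coef_map /= !horner_evalE => ->.
by rewrite subrr.
Qed.

Lemma size_hornerC (C : numClosedFieldType) (P : {poly {poly C}}) (c : C) :
  (size (P.[c%:P])%R <= \max_(i < size P) size (P`_i)%R)%N.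
Proof.
rewrite horner_coef; apply: leq_trans (size_sum _ _ _) _.
apply/bigmax_leqP => i _; rewrite -rmorphXn /=.
apply: leq_trans (size_polyMleq _ _) _.
rewrite size_polyC; apply: (@leq_trans (size P`_i)); last exact: (leq_bigmax_cond i).
by case: (_ != 0); rewrite ?addn1 ?addn0 // leq_pred.
Qed.

Definition lin (C : numClosedFieldType) (l : int * int) : {poly C} :=
  l.1%:~R *: 'X + l.2%:~R%:P.

Definition Hyp (C : numClosedFieldType) (M n : nat) (P : {poly {poly C}}) :=
  forall k : nat, exists2 S : seq int, size S = n &
    map_poly (horner_eval (k%:R : C)) P = \prod_(x <- S) ('X - (x%:~R)%:P) /\
    (forall x, x \in S -> `|x| <= (M * k.+1)%:Z).

Lemma lin_eval (C : numClosedFieldType) (l : int * int) (k : nat) :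
  (lin C l).[k%:R] = (l.1 * k%:Z + l.2)%:~R.
Proof.
by rewrite /lin hornerD hornerZ hornerX hornerC rmorphD rmorphM /=.
Qed.

Lemma factor_step (C : numClosedFieldType) M n (P : {poly {poly C}}) (l : int * int) :
  Hyp M n.+1 P -> P.[lin C l] = 0 ->
  exists2 P', P = P' * ('X - (lin C l)%:P) & Hyp M n P'.
Proof.
move=> H Hr.
have /factor_theorem [P' HP'] : root P (lin C l) by apply/eqP.
exists P' => // k; have [S HS [HP Hb]] := H k.
have Hz : (P.[lin C l]).[k%:R] = 0 by rewrite Hr horner0.
rewrite eval_comp HP prod_eval lin_eval in Hz.
move/eqP: Hz; rewrite prodf_seq_eq0 => /hasP [x xS /= /eqP].
move/eqP; rewrite subr_eq0 => /eqP /intr_inj Ex.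
exists (rem x S); first by rewrite size_rem // HS.
split; last by move=> y /mem_rem; apply: Hb.
have Hne : ('X - ((l.1 * k%:Z + l.2)%:~R : C)%:P) != 0.
  by rewrite polyXsubC_eq0.
apply: (mulIf Hne).
have := HP; rewrite HP' rmorphM /= rmorphB /= map_polyX map_polyC /= horner_evalE lin_eval => ->.
by rewrite (big_rem x) //= Ex mulrC.
Qed.

Lemma nat_bound3 a p M : (0 < p)%N -> (a * p <= M * p.+1 + M)%N -> (a <= 3 * M)%N.
Proof.
move=> /ssrnat.leP H1 /ssrnat.leP H2; apply/ssrnat.leP.
rewrite -!multE -!plusE in H2 *. nia.
Qed.

Lemma common_bound (T : eqType) (F : seq T) (Q : T -> nat -> Prop) :
  (forall l, l \in F -> exists B, forall k, (B <= k)%N -> Q l k) ->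
  exists B, forall l, l \in F -> forall k, (B <= k)%N -> Q l k.
Proof.
elim: F => [|x F IH] H; first by exists 0%N.
have [B1 H1] := H x (mem_head _ _).
have [B2 H2] : exists B, forall l, l \in F -> forall k, (B <= k)%N -> Q l k.
  by apply: IH => l lF; apply: H; rewrite in_cons lF orbT.
exists (maxn B1 B2) => l; rewrite in_cons => /orP [/eqP -> | lF] k Hk.
  by apply: H1; apply: leq_trans Hk; apply: leq_maxl.
by apply: H2 => //; apply: leq_trans Hk; apply: leq_maxr.
Qed.

Definition Jr (M : nat) : seq int :=
  [seq (a%:Z) | a <- iota 0 (3 * M).+1] ++ [seq (- a%:Z) | a <- iota 0 (3 * M).+1].

Lemma mem_Jr M (q : int) : (`|q| <= 3 * M)%N -> q \in Jr M.
Proof.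
rewrite /Jr mem_cat; case: q => a Ha.
  by apply/orP; left; apply/mapP; exists a => //; rewrite mem_iota add0n ltnS.
apply/orP; right; apply/mapP; exists a.+1; first by rewrite mem_iota add0n ltnS.
by rewrite NegzE.
Qed.

Lemma absz_prod (I : Type) (r : seq I) (F : I -> int) :
  `|(\prod_(i <- r) F i)%R|%N = (\prod_(i <- r) `|F i|%N)%N.
Proof.
elim: r => [|x r IH]; first by rewrite !big_nil.
by rewrite !big_cons abszM IH.
Qed.

Lemma gr_eval (C : numClosedFieldType) (P : {poly {poly C}}) (r : int) (k : nat) S :
  map_poly (horner_eval (k%:R : C)) P = \prod_(x <- S) ('X - (x%:~R)%:P) ->
  (P.[(r%:~R : C)%:P]).[k%:R] = (\prod_(x <- S) (r - x))%:~R.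
Proof.
move=> HP; rewrite eval_comp HP hornerC prod_eval rmorph_prod.
by apply: eq_bigr => x _; rewrite rmorphB.
Qed.

Lemma key_cong (C : numClosedFieldType) M n (P : {poly {poly C}}) (p : nat) S0 Sp (r : int) :
  Hyp M n P -> prime p -> (\max_(i < size P) size (P`_i)%R <= p)%N ->
  map_poly (horner_eval (0%:R : C)) P = \prod_(x <- S0) ('X - (x%:~R)%:P) ->
  map_poly (horner_eval (p%:R : C)) P = \prod_(x <- Sp) ('X - (x%:~R)%:P) ->
  r \in Sp -> exists2 s, s \in S0 & exists q : int, r - s = q * p%:Z.
Proof.
move=> H pp HD H0 Hp rSp.
have Hgz : forall k : nat, exists z : int, (P.[(r%:~R : C)%:P]).[k%:R] = z%:~R.
  by move=> k; have [S _ [HS _]] := H k; eexists; apply: gr_eval HS.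
have [z Hz] := congr_p pp (leq_trans (size_hornerC _ _) HD) Hgz.
move: Hz; rewrite (gr_eval _ Hp).
have -> : (0 : C) = 0%:R by [].
rewrite (gr_eval _ H0) -rmorphB => /intr_inj.
have -> : \prod_(x <- Sp) (r - x) = 0.
  by apply/eqP; rewrite prodf_seq_eq0; apply/hasP; exists r => //; rewrite subrr.
rewrite sub0r => Hd.
have : (p%:Z %| \prod_(x <- S0) (r - x))%Z.
  by apply/dvdzP; exists (- z); rewrite mulNr -Hd opprK.
rewrite dvdzE absz_prod /= (Euclid_dvd_prod _ _ _ pp) big_has => /hasP [s sS0 Hs].
exists s => //; apply/dvdzP; rewrite dvdzE; exact: Hs.
Qed.

Lemma find_line (C : numClosedFieldType) M n (P : {poly {poly C}}) :
  Hyp M n.+1 P -> exists l : int * int, P.[lin C l] = 0.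
Proof.
move=> H.
set D := (\max_(i < size P) size (P`_i)%R)%N.
have [S0 HS0 [HP0 Hb0]] := H 0%N.
set F := [seq (j, s) | j <- Jr M, s <- S0].
have [/hasP [l _ /eqP Hl] | Hno] := boolP (has (fun l => P.[lin C l] == 0) F).
  by exists l.
exfalso.
have HB : forall l, l \in F -> exists B, forall k, (B <= k)%N -> (P.[lin C l]).[k%:R] != 0.
  move=> l lF; apply: NNPP => Hn.
  have : P.[lin C l] = 0.
    apply: roots_inf => B; apply: NNPP => HnB; apply: Hn; exists B => k Hk.
    by apply/eqP => Hr; apply: HnB; exists k.
  by move=> Hz; move/negP: Hno; apply; apply/hasP; exists l => //; rewrite Hz.
have [B0 HB0] := common_bound HB.
have [p Hp pp] := prime_above (maxn B0 D).
have [Sp HSp [HPp Hbp]] := H p.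
have p0 : (0 < p)%N by apply: prime_gt0.
case: Sp HSp HPp Hbp => [//|r Sp'] _ HPp Hbp.
have rS : r \in r :: Sp' by apply: mem_head.
have HD : (D <= p)%N by apply: ltnW; apply: leq_ltn_trans Hp; apply: leq_maxr.
have [s sS0 [q Hq]] := key_cong H pp HD HP0 HPp rS.
have Hq3 : (`|q| <= 3 * M)%N.
  apply: (@nat_bound3 _ p) => //.
  have Hr := Hbp r rS; have Hs := Hb0 s sS0.
  rewrite -lez_nat PoszD PoszM abszE.
  have -> : `|q|%:Z * p%:Z = `|r - s|%R by rewrite Hq normrM.
  apply: le_trans (ler_normB _ _) _.
  by apply: lerD => //; rewrite -(muln1 M).
have lF : (q, s) \in F by apply: allpairs_f => //; apply: mem_Jr.
have Hpk : (B0 <= p)%N by apply: ltnW; apply: leq_ltn_trans Hp; apply: leq_maxl.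
have := HB0 _ lF p Hpk; rewrite eval_comp HPp prod_eval lin_eval /=.
rewrite prodf_seq_eq0 => /negP; apply; apply/hasP; exists r => //=.
have -> : q * p%:Z + s = r by rewrite -Hq subrK.
by rewrite subrr.
Qed.

Lemma main_bi (C : numClosedFieldType) M n (P : {poly {poly C}}) :
  Hyp M n P -> exists L : seq (int * int), P = \prod_(l <- L) ('X - (lin C l)%:P).
Proof.
elim: n P => [|n IH] P H.
  exists [::]; rewrite big_nil; apply: bipoly_eq => k.
  have [S HS [HP _]] := H k; rewrite HP rmorph1.
  by case: S HS {HP} => // _; rewrite big_nil.
have [l Hl] := find_line H; have [P' HP' H'] := factor_step H Hl.
have [L HL] := IH P' H'; exists (l :: L).
by rewrite big_cons HP' HL mulrC.
Qed.

Lemma Mt_eval (C : numClosedFieldType) n (A B : 'M[C]_n) (c : C) :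
  map_poly (horner_eval c) (char_poly (Mt A B)) = char_poly (c *: A + B).
Proof.
rewrite map_char_poly; congr char_poly; apply/matrixP => i j.
by rewrite !mxE /= horner_evalE hornerD hornerM hornerX !hornerC.
Qed.

Lemma intpoly (C : numClosedFieldType) (S : seq int) :
  \prod_(x <- S) ('X - ((x%:~R : C))%:P) =
  map_poly (fun z : int => (z%:~R : C)) (\prod_(x <- S) ('X - x%:P)).
Proof.
rewrite rmorph_prod; apply: eq_bigr => x _.
by rewrite rmorphB /= map_polyX map_polyC.
Qed.

Lemma split_int (C : numClosedFieldType) n (N : 'M[C]_n) :
  spec_in_Z N -> exists2 S : seq int, size S = n &
    char_poly N = \prod_(x <- S) ('X - (x%:~R)%:P).
Proof.
move=> HZ; have [rs Hrs] := closed_field_poly_normal (char_poly N).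
rewrite (monicP (char_poly_monic N)) scale1r in Hrs.
have Hall : forall z, z \in rs -> exists x : int, z = x%:~R.
  move=> z zr; apply: HZ; rewrite eigenvalue_root_char Hrs.
  by rewrite root_prod_XsubC.
have [S HS] : exists S : seq int, rs = map (fun x : int => (x%:~R : C)) S.
  elim: rs Hall {Hrs} => [|z rs IH] Hall; first by exists [::].
  have [x Hx] := Hall z (mem_head _ _).
  have [S HS] := IH (fun w wr => Hall w (@mem_behead _ (z :: rs) w wr)).
  by exists (x :: S); rewrite /= Hx HS.
exists S.
  have := size_char_poly N; rewrite Hrs size_prod_XsubC HS size_map.
  by case.
by rewrite Hrs HS big_map.
Qed.

Lemma wdegX2 (R : comRingType) : wdeg ('X^2 : {poly {poly R}}) 2.
Proof.
move=> i; rewrite coefXn; case: eqP => [->|_]; first by rewrite size_poly1.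
by rewrite size_poly0.
Qed.

Lemma sq_le_sum (S : seq int) (x : int) : x \in S -> x ^+ 2 <= \sum_(y <- S) y ^+ 2.
Proof.
move=> xS; rewrite (big_rem x) //= lerDl; apply: sumr_ge0 => y _; apply: sqr_ge0.
Qed.

Lemma root_bound (C : numClosedFieldType) n (A B : 'M[C]_n) :
  (forall k : nat, spec_in_Z (k%:R *: A + B)) ->
  exists M : nat, forall (k : nat) (S : seq int),
    char_poly (k%:R *: A + B) = \prod_(x <- S) ('X - (x%:~R)%:P) ->
    forall x, x \in S -> `|x| <= (M * k.+1)%:Z.
Proof.
move=> HZ.
set P := char_poly (Mt A B); set Q2 := 'X^2 * P.
have HW : wdeg Q2 (2 + n) by apply: wdegM; [apply: wdegX2 | apply: wdeg_char].
have HQk : forall (k : nat) S, char_poly (k%:R *: A + B) = \prod_(x <- S) ('X - (x%:~R)%:P) ->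
    map_poly (horner_eval (k%:R : C)) Q2 = 'X^2 * \prod_(x <- S) ('X - (x%:~R)%:P).
  by move=> k S HS; rewrite rmorphM /= map_polyXn Mt_eval HS.
have Hint : forall i (k : nat), exists z : int, (Q2`_i).[k%:R] = z%:~R.
  move=> i k; have [S _ HS] := split_int (HZ k).
  have := congr1 (fun p : {poly C} => p`_i) (HQk k S HS).
  rewrite coef_map /= horner_evalE => ->.
  rewrite intpoly coefXnM coef_map /=.
  by case: (i < 2)%N; [exists 0 | eexists].
have Hs1 : (size (Q2`_n.+1)%R <= 2)%N.
  by apply: leq_trans (HW _) _; rewrite subSS addnK.
have Hs2 : (size (Q2`_n)%R <= 3)%N.
  by apply: leq_trans (HW _) _; rewrite -addSn addnK.
have [K1 HK1] := newton_bound Hs1 (Hint _).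
have [K2 HK2] := newton_bound Hs2 (Hint _).
exists `|(K1 ^+ 2 + 2 * K2)%R|%N.+1 => k S HS x xS.
have [z1 E1 B1] := HK1 k; have [z2 E2 B2] := HK2 k.
have HSn : size S = n.
  by have := size_char_poly (k%:R *: A + B); rewrite HS size_prod_XsubC; case.
have [_ _ H1 HSq] := sumsq [seq (y%:~R : C) | y <- S].
have HR : 'X^2 * \prod_(y <- [seq (y%:~R : C) | y <- S]) ('X - y%:P) =
   map_poly (horner_eval (k%:R : C)) Q2 by rewrite big_map (HQk k S HS).
rewrite HR size_map HSn !coef_map /= !horner_evalE E1 E2 in H1 HSq.
have Hsum : \sum_(y <- [seq (y%:~R : C) | y <- S]) y = (- z1)%:~R.
  by rewrite -[LHS]opprK -H1 rmorphN.
rewrite Hsum big_map -(rmorphXn _ 2) /= in HSq.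
have Hi : \sum_(j <- S) j ^+ 2 = z1 ^+ 2 - 2 * z2.
  apply: (@intr_inj C); rewrite rmorphB rmorph_sum /=.
  rewrite (eq_bigr (fun j => (j%:~R : C) ^+ 2)); last by move=> j _; rewrite rmorphXn.
  by rewrite HSq sqrrN rmorphXn rmorphM.
set K := (K1 ^+ 2 + 2 * K2)%R.
set kk : int := k.+1%:Z.
set Mz : int := (`|K|.+1)%:Z.
have Hx2 : x ^+ 2 <= z1 ^+ 2 - 2 * z2 by rewrite -Hi; apply: sq_le_sum.
rewrite expn1 in B1.
have kk2 : (k.+1 ^ 2)%N%:Z = kk ^+ 2 by rewrite -mulnn PoszM -expr2.
rewrite kk2 in B2.
have K1p : 0 <= K1 * kk by apply: le_trans B1; apply: normr_ge0.
have h1 : z1 ^+ 2 <= (K1 * kk) ^+ 2.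
  rewrite -(real_normK (num_real z1)) ler_pXn2r // ?nnegrE ?normr_ge0 //.
have h2 : - (2 * z2) <= 2 * (K2 * kk ^+ 2).
  apply: le_trans (ler_norm _) _; rewrite normrN normrM.
  by apply: ler_wpM2l.
have h3 : z1 ^+ 2 - 2 * z2 <= K * kk ^+ 2.
  by apply: le_trans (lerD h1 h2) _; rewrite exprMn mulrA -mulrDl.
have h4 : K * kk ^+ 2 <= Mz * kk ^+ 2.
  apply: ler_wpM2r; first exact: sqr_ge0.
  apply: le_trans (ler_norm _) _; rewrite -abszE /Mz lez_nat; exact: leqnSn.
have h5 : Mz * kk ^+ 2 <= (Mz * kk) ^+ 2.
  rewrite exprMn; apply: ler_wpM2r; first exact: sqr_ge0.
  rewrite expr2 ler_pMr // /Mz ?lez_nat ?ltz_nat //.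
rewrite PoszM -/kk -/Mz.
have := le_trans Hx2 (le_trans h3 (le_trans h4 h5)).
rewrite -(real_normK (num_real x)) ler_pXn2r // ?nnegrE ?normr_ge0 //.

Qed.

Lemma char_eval (C : numClosedFieldType) n (N : 'M[C]_n) (z : C) :
  (char_poly N).[z] = \det (z%:M - N).
Proof.
rewrite -horner_evalE /char_poly -det_map_mx; congr (\det _).
apply/matrixP => i j; rewrite !mxE /= horner_evalE hornerD hornerN hornerMn hornerX hornerC.
by case: (i == j); rewrite ?mulr1n ?mulr0n.
Qed.

Lemma prod_const (R : comRingType) (I : Type) (r : seq I) (c : R) :
  \prod_(i <- r) c = c ^+ size r.
Proof. by elim: r => [|x r IH]; rewrite ?big_nil ?expr0 // big_cons IH exprS. Qed.

Lemma scale_char (C : numClosedFieldType) n (N : 'M[C]_n) (I : Type) (r : seq I) (f : I -> C) (c : C) :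
  c != 0 -> char_poly N = \prod_(i <- r) ('X - (f i)%:P) ->
  char_poly (c *: N) = \prod_(i <- r) ('X - (c * f i)%:P).
Proof.
move=> c0 HN.
have Hr : size r = n.
  by have := size_char_poly N; rewrite HN size_prod_XsubC; case.
apply/eqP; rewrite -subr_eq0; apply/eqP; apply: poly_nat_roots => k.
set z : C := k%:R.
rewrite hornerD hornerN char_eval.
have E : z%:M - c *: N = c *: ((z / c)%:M - N).
  by rewrite scalerBr scale_scalar_mx mulrC divfK.
rewrite E detZ -char_eval HN !horner_prod -Hr -prod_const -big_split /=.
apply/eqP; rewrite subr_eq0; apply/eqP; apply: eq_bigr => i _.
by rewrite !hornerXsubC mulrBr [c * (z / c)]mulrC divfK.
Qed.

Lemma bipoly_eqS (C : numClosedFieldType) (P Q : {poly {poly C}}) :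
  (forall k : nat, map_poly (horner_eval (k.+1%:R : C)) P = map_poly (horner_eval (k.+1%:R : C)) Q) ->
  P = Q.
Proof.
move=> H; apply/polyP => i; apply/eqP; rewrite -subr_eq0; apply/eqP.
apply: roots_inf => B; exists B.+1 => //; rewrite hornerD hornerN.
have := congr1 (fun p : {poly C} => p`_i) (H B); rewrite !coef_map /= !horner_evalE => ->.
by rewrite subrr.
Qed.

Lemma char_poly0 (C : numClosedFieldType) n : char_poly (0 : 'M[C]_n) = 'X ^+ n.
Proof.
rewrite /char_poly /char_poly_mx.
have -> : map_mx polyC (0 : 'M[C]_n) = 0 by apply/matrixP => i j; rewrite !mxE.
by rewrite subr0 det_scalar.
Qed.

Lemma eval_prod_lin (C : numClosedFieldType) (L : seq (int * int)) (c : C) :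
  map_poly (horner_eval c) (\prod_(l <- L) ('X - (lin C l)%:P)) =
  \prod_(l <- L) ('X - (l.1%:~R * c + l.2%:~R)%:P).
Proof.
rewrite rmorph_prod; apply: eq_bigr => l _.
by rewrite rmorphB /= map_polyX map_polyC /= horner_evalE /lin hornerD hornerZ hornerX hornerC.
Qed.

Theorem mainTheorem5 (C : numClosedFieldType) (n : nat) (A B : 'M[C]_n) :
  (forall k : nat, spec_in_Z (k%:R *: A + B)) -> propertyL A B.
Proof.
move=> HZ.
have [M HM] := root_bound HZ.
set P := char_poly (Mt A B).
have Hy : Hyp M n P.
  move=> k; have [S HS Hc] := split_int (HZ k).
  exists S => //; split; first by rewrite Mt_eval.
  exact: HM Hc.
have [L HL] := main_bi Hy.
have sL : size L = n.
  by have := size_char_poly (Mt A B); rewrite -/P HL size_prod_XsubC; case.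
have Hc : forall c : C, char_poly (c *: A + B) = \prod_(l <- L) ('X - (l.1%:~R * c + l.2%:~R)%:P).
  by move=> c; rewrite -Mt_eval -/P HL; apply: eval_prod_lin.
have HBA : char_poly (Mt B A) = \prod_(l <- [seq (l.2, l.1) | l <- L]) ('X - (lin C l)%:P).
  apply: bipoly_eqS => k; rewrite Mt_eval.
  set c : C := k.+1%:R.
  transitivity (\prod_(l <- [seq (l.2, l.1) | l <- L]) ('X - (l.1%:~R * c + l.2%:~R)%:P));
    last by symmetry; apply: eval_prod_lin.
  rewrite big_map /=.
  have c0 : c != 0 by rewrite /c pnatr_eq0.
  have -> : c *: B + A = c *: (c^-1 *: A + B).
    by rewrite scalerDr scalerA mulfV // scale1r addrC.
  rewrite (scale_char c0 (Hc _)); apply: eq_bigr => l _.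
  by rewrite mulrDr mulrCA mulfV // mulr1 [l.1%:~R + _]addrC [c * _]mulrC.
have HA : char_poly A = \prod_(l <- L) ('X - (l.1%:~R)%:P).
  have := congr1 (map_poly (horner_eval 0)) HBA.
  rewrite Mt_eval scale0r add0r => ->.
  transitivity (\prod_(l <- [seq (l.2, l.1) | l <- L]) ('X - ((l.1%:~R : C) * 0 + l.2%:~R)%:P));
    first by apply: eval_prod_lin.
  rewrite big_map; apply: eq_bigr => l _ /=.
  have E0 : (l.2%:~R : C) * 0 + l.1%:~R = l.1%:~R by rewrite mulr0 add0r.
  by rewrite E0.
exists (fun i : 'I_n => (nth (0, 0) L i).1%:~R), (fun i : 'I_n => (nth (0, 0) L i).2%:~R) => x y.
set F := fun l : int * int => 'X - (l.1%:~R * x + l.2%:~R * y)%:P.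
have -> : \prod_(k < n) ('X - ((nth (0, 0) L k).1%:~R * x + (nth (0, 0) L k).2%:~R * y)%:P) =
  \prod_(l <- L) F l.
  by rewrite (big_nth (0, 0)) sL big_mkord.
have [y0|y0] := eqVneq y 0.
  rewrite /F y0 scale0r addr0.
  have [x0|x0] := eqVneq x 0.
    rewrite x0 scale0r char_poly0.
    rewrite (eq_bigr (fun _ => 'X)); last by move=> l _; rewrite !mulr0 addr0 subr0.
    by rewrite prod_const sL.
  rewrite (scale_char x0 HA); apply: eq_bigr => l _.
  by rewrite mulr0 addr0 mulrC.
have -> : x *: A + y *: B = y *: ((x / y) *: A + B).
  by rewrite scalerDr scalerA mulrC divfK.
rewrite (scale_char y0 (Hc _)); apply: eq_bigr => l _.
by rewrite /F mulrDr mulrCA [y * (x / y)]mulrC divfK // [y * _]mulrC.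
Qed.
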